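(* Let $R$ be a commutative ring and $Q$ an ordered quiver with vertex set $Q_0=\{1,\dots,n\}$. Let $\Lambda$ be the incidence $R$-algebra of $Q$, regarded as the $R$-subalgebra $\Lambda=\bigoplus_{a\ge b}R\,E_{ba}\subseteq\mathrm{M}_n(R)$. Then $H^i(\Lambda,\mathrm{M}_n(R)/\Lambda)=0$ for all $i\ge 0$.
   Context: A finite quiver $Q$ without oriented cycles is ordered if for each arrow $\alpha$ there is no oriented path other than $\alpha$ from the tail $t(\alpha)$ to the head $h(\alpha)$. On $Q_0$ set $a\ge b$ if $a=b$ or there is an oriented path from $a$ to $b$; this is a partial order. The incidence algebra is $RQ/I$ where $I$ is generated by differences of oriented paths with the same head and tail; it is $R$-free with basis the classes $e_{ba}$ ($a\ge b$) of paths from $a$ to $b$, and $e_{ba}\mapsto E_{ba}$ (matrix unit) identifies it with $\bigoplus_{a\ge b}RE_{ba}\subseteq\mathrm{M}_n(R)$. $H^i$ is Hochschild cohomology ($\mathrm{Ext}$ over $\Lambda\otimes_R\Lambda^{op}$), with $\mathrm{M}_n(R)/\Lambda$ a $\Lambda$-bimodule via matrix multiplication. *)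

(* Defs.v *)
From HB Require Import structures.
From mathcomp Require Import all_boot all_order all_algebra.
Set Implicit Arguments. Unset Strict Implicit. Unset Printing Implicit Defensive.
Import GRing.Theory.
Local Open Scope ring_scope.

(* A finite quiver with vertex set 'I_n (= {1,...,n} relabelled 0..n-1),
   finite arrow type Ar, tail map tl and head map hd. *)
Section Quiver.
Variables (n : nat) (Ar : finType) (tl hd : Ar -> 'I_n).

Fixpoint apath (x : 'I_n) (p : seq Ar) (y : 'I_n) : bool :=
  match p with
  | [::] => x == y
  | a :: p' => (tl a == x) && apath (hd a) p' y
  end.

Definition no_oriented_cycles : Prop :=
  forall (x : 'I_n) (p : seq Ar), apath x p x -> p = [::].

Definition ordered_quiver : Prop :=
  no_oriented_cycles /\
  forall (a : Ar) (p : seq Ar), apath (tl a) p (hd a) -> p = [:: a].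

Definition arrow_rel : rel 'I_n :=
  fun x y => [exists a, (tl a == x) && (hd a == y)].

Definition qge (a b : 'I_n) : bool := connect arrow_rel a b.

End Quiver.

Section Incidence.
Variables (R : comPzRingType) (n : nat) (Ar : finType) (tl hd : Ar -> 'I_n).
Local Notation ge := (qge tl hd).

Definition inLam (A : 'M[R]_n) : bool :=
  [forall b : 'I_n, forall a : 'I_n, (~~ ge a b) ==> (A b a == 0)].

(* The quotient M_n(R)/Lambda, represented by its canonical complement
   (+)_{not a >= b} R E_{ba}; proj is the quotient map. *)
Definition projQ (A : 'M[R]_n) : 'M[R]_n :=
  \matrix_(b, a) (if ge a b then 0 else A b a).

Definition inQ (A : 'M[R]_n) : bool := projQ A == A.

Definition actl (l m : 'M[R]_n) : 'M[R]_n := projQ (l *m m).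
Definition actr (m l : 'M[R]_n) : 'M[R]_n := projQ (m *m l).

(* Hochschild cochains of degree k: R-multilinear maps Lambda^k -> M_n(R)/Lambda,
   represented as functions on lists of matrices (only values on lists of
   length k with entries in Lambda matter). *)
Definition cochain (k : nat) (f : seq 'M[R]_n -> 'M[R]_n) : Prop :=
  (forall s, size s = k -> all inLam s -> inQ (f s)) /\
  (forall s1 s2 (x y : 'M[R]_n) (c : R),
      (size s1 + size s2).+1 = k -> all inLam s1 -> all inLam s2 ->
      inLam x -> inLam y ->
      f (s1 ++ (c *: x + y) :: s2) = c *: f (s1 ++ x :: s2) + f (s1 ++ y :: s2)).

Definition mergeAt (j : nat) (s : seq 'M[R]_n) : seq 'M[R]_n :=
  take j s ++ (nth 0 s j *m nth 0 s j.+1) :: drop j.+2 s.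

(* Hochschild differential C^k -> C^(k+1), evaluated on s of length k+1 *)
Definition hdiff (k : nat) (f : seq 'M[R]_n -> 'M[R]_n) (s : seq 'M[R]_n)
  : 'M[R]_n :=
  actl (nth 0 s 0) (f (behead s))
  + \sum_(j < k) (-1) ^+ j.+1 *: f (mergeAt j s)
  + (-1) ^+ k.+1 *: actr (f (take k s)) (nth 0 s k).

Definition cocycle (k : nat) f : Prop :=
  forall s, size s = k.+1 -> all inLam s -> hdiff k f s = 0.

Definition coboundary (k : nat) f : Prop :=
  match k with
  | 0 => forall s, size s = 0 -> f s = 0
  | k'.+1 => exists g, cochain k' g /\
      forall s, size s = k -> all inLam s -> f s = hdiff k' g s
  end.

Definition HH_vanishes (k : nat) : Prop :=
  forall f, cochain k f -> cocycle k f -> coboundary k f.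

End Incidence.

(* Main.v *)
Require Import Defs.
From mathcomp Require Import all_boot all_order all_algebra ring zify.
From Stdlib Require Import FunctionalExtensionality.
Set Implicit Arguments. Unset Strict Implicit. Unset Printing Implicit Defensive.
Import GRing.Theory.
Local Open Scope ring_scope.

Ltac mxring := apply/matrixP => ? ?; rewrite !mxE; ring.

Section Work.
Variables (R : comPzRingType) (n : nat) (Ar : finType) (tl hd : Ar -> 'I_n).
Local Notation M := 'M[R]_n.
Local Notation ge := (qge tl hd).
Local Notation iL := (@inLam R n Ar tl hd).
Local Notation pQ := (@projQ R n Ar tl hd).
Local Notation al := (@actl R n Ar tl hd).
Local Notation ar := (@actr R n Ar tl hd).

Definition E (c : 'I_n) : M := delta_mx c c.

Lemma ge_refl a : ge a a.
Proof. exact: connect0. Qed.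

Lemma ge_trans a b c : ge a b -> ge b c -> ge a c.
Proof. exact: connect_trans. Qed.

Lemma iLP (A : M) : reflect (forall b a, ~~ ge a b -> A b a = 0) (iL A).
Proof.
apply: (iffP forallP) => [H b a nab|H b].
  by move: (H b) => /forallP /(_ a) /implyP /(_ nab) /eqP.
by apply/forallP => a; apply/implyP => nab; apply/eqP; apply: H.
Qed.

Lemma iL_mul (A B : M) : iL A -> iL B -> iL (A *m B).
Proof.
move=> /iLP hA /iLP hB; apply/iLP => b a nab; rewrite mxE big1 // => c _.
case gcb: (ge c b); last by rewrite hA ?gcb // mul0r.
case gac: (ge a c); last by rewrite hB ?gac // mulr0.
by rewrite (ge_trans gac gcb) in nab.
Qed.

Lemma iL_lin a (A B : M) : iL A -> iL B -> iL (a *: A + B).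
Proof.
move=> /iLP hA /iLP hB; apply/iLP => b c nab.
by rewrite !mxE hA // hB // mulr0 addr0.
Qed.

Lemma iL0 : iL 0.
Proof. by apply/iLP => b a _; rewrite mxE. Qed.

Lemma iLD (A B : M) : iL A -> iL B -> iL (A + B).
Proof. by move=> hA hB; rewrite -[A]scale1r; apply: iL_lin. Qed.

Lemma iL_sum I (r : seq I) (P : pred I) (F : I -> M) :
  (forall i, P i -> iL (F i)) -> iL (\sum_(i <- r | P i) F i).
Proof. by move=> h; apply: (big_ind iL) => //; [exact: iL0 | exact: iLD]. Qed.

Lemma iLE c : iL (E c).
Proof.
apply/iLP => b a nab; rewrite mxE.
case: eqP => [eb|]; case: eqP => [ea|] //=; subst.
by rewrite ge_refl in nab.
Qed.

Lemma pQ_lam (A : M) : iL A -> pQ A = 0.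
Proof.
move=> /iLP h; apply/matrixP => b a; rewrite !mxE.
by case: ifP => // /negbT /h ->.
Qed.

Lemma pQ_lin a (A B : M) : pQ (a *: A + B) = a *: pQ A + pQ B.
Proof.
apply/matrixP => b c; rewrite !mxE; case: ifP => _ //.
by rewrite mulr0 addr0.
Qed.

Lemma pQD (A B : M) : pQ (A + B) = pQ A + pQ B.
Proof. by apply/matrixP => b c; rewrite !mxE; case: ifP => // _; rewrite addr0. Qed.
Lemma pQZ a (A : M) : pQ (a *: A) = a *: pQ A.
Proof. by apply/matrixP => b c; rewrite !mxE; case: ifP => // _; rewrite mulr0. Qed.
Lemma pQ0 : pQ 0 = 0.
Proof. by apply: pQ_lam; exact: iL0. Qed.
Lemma pQN (A : M) : pQ (- A) = - pQ A.
Proof. by rewrite -scaleN1r pQZ scaleN1r. Qed.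
Lemma pQB (A B : M) : pQ (A - B) = pQ A - pQ B.
Proof. by rewrite pQD pQN. Qed.
Lemma pQ_sum I (r : seq I) (P : pred I) (F : I -> M) :
  pQ (\sum_(i <- r | P i) F i) = \sum_(i <- r | P i) pQ (F i).
Proof. exact: (big_morph pQ pQD pQ0). Qed.

Lemma iL_res (A : M) : iL (A - pQ A).
Proof.
apply/iLP => b a nab; rewrite !mxE.
by case: ifP => h; [rewrite h in nab | rewrite subrr].
Qed.

Lemma pQ_mull (l A : M) : iL l -> pQ (l *m pQ A) = pQ (l *m A).
Proof.
move=> hl; have := iL_mul hl (iL_res A).
move/pQ_lam; rewrite mulmxBr pQB => /eqP; rewrite subr_eq0 => /eqP.
by move=> ->.
Qed.

Lemma pQ_mulr (l A : M) : iL l -> pQ (pQ A *m l) = pQ (A *m l).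
Proof.
move=> hl; have := iL_mul (iL_res A) hl.
by move/pQ_lam; rewrite mulmxBl pQB => /eqP; rewrite subr_eq0 => /eqP ->.
Qed.

Lemma pQ_id (A : M) : pQ (pQ A) = pQ A.
Proof.
apply/matrixP => b a; rewrite !mxE; by case: ifP => h; rewrite ?h.
Qed.

Lemma al_assoc (a b m : M) : iL a -> al a (al b m) = al (a *m b) m.
Proof. by move=> ha; rewrite /actl pQ_mull // mulmxA. Qed.

Lemma al_ar (a m x : M) : iL a -> iL x -> al a (ar m x) = ar (al a m) x.
Proof. by move=> ha hx; rewrite /actl /actr pQ_mull // pQ_mulr // mulmxA. Qed.

Lemma al_linr (l : M) a (A B : M) : al l (a *: A + B) = a *: al l A + al l B.
Proof. by rewrite /actl mulmxDr -scalemxAr pQ_lin. Qed.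
Lemma al_linl (l1 l2 : M) a (A : M) : al (a *: l1 + l2) A = a *: al l1 A + al l2 A.
Proof. by rewrite /actl mulmxDl -scalemxAl pQ_lin. Qed.
Lemma ar_linl (l : M) a (A B : M) : ar (a *: A + B) l = a *: ar A l + ar B l.
Proof. by rewrite /actr mulmxDl -scalemxAl pQ_lin. Qed.

Lemma al_sumr (l : M) I (r : seq I) (P : pred I) (F : I -> M) :
  al l (\sum_(i <- r | P i) F i) = \sum_(i <- r | P i) al l (F i).
Proof. by rewrite /actl mulmx_sumr pQ_sum. Qed.
Lemma al_suml (m : M) I (r : seq I) (P : pred I) (F : I -> M) :
  al (\sum_(i <- r | P i) F i) m = \sum_(i <- r | P i) al (F i) m.
Proof. by rewrite /actl mulmx_suml pQ_sum. Qed.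
Lemma ar_suml (l : M) I (r : seq I) (P : pred I) (F : I -> M) :
  ar (\sum_(i <- r | P i) F i) l = \sum_(i <- r | P i) ar (F i) l.
Proof. by rewrite /actr mulmx_suml pQ_sum. Qed.
Lemma al0 (l : M) : al l 0 = 0.
Proof. by rewrite /actl mulmx0 pQ0. Qed.
Lemma alN (l A : M) : al l (- A) = - al l A.
Proof. by rewrite /actl mulmxN pQN. Qed.
Lemma alD (l A B : M) : al l (A + B) = al l A + al l B.
Proof. by rewrite /actl mulmxDr pQD. Qed.
Lemma alZ (l : M) a (A : M) : al l (a *: A) = a *: al l A.
Proof. by rewrite /actl -scalemxAr pQZ. Qed.

Lemma sumE : \sum_(c : 'I_n) E c = 1%:M.
Proof. by rewrite mx1_sum_delta. Qed.

Lemma EE c : E c *m E c = E c.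
Proof. by rewrite /E mul_delta_mx. Qed.

Lemma EXE a (X : M) c : (E a *m X *m E c) = X a c *: delta_mx a c.
Proof.
rewrite /E; apply/matrixP => i j; rewrite !mxE (bigD1 c) //= big1 => [|k /negPf kc]; last first.
  by rewrite !mxE kc mulr0.
rewrite addr0 !mxE eqxx /= (bigD1 a) //= big1 => [|k /negPf ka]; last first.
  by rewrite !mxE ka andbF mul0r.
rewrite addr0 !mxE eqxx andbT.
by case: eqP; case: eqP; rewrite /= ?mulr1 ?mul1r ?mul0r ?mulr0 // => -> ->.
Qed.


Lemma EXE_lam a (X : M) c : ge c a -> iL (E a *m X *m E c).
Proof.
move=> h; rewrite EXE; apply/iLP => i j nji; rewrite !mxE.
case: eqP => [ia|]; case: eqP => [jc|] /=; rewrite ?mulr0 //; subst.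
by rewrite h in nji.
Qed.

Lemma EXE0 a (X : M) c : iL X -> ~~ ge c a -> E a *m X *m E c = 0.
Proof. by move=> /iLP hX h; rewrite EXE hX // scale0r. Qed.

Lemma inQ_pQ (A : M) : inQ tl hd A -> pQ A = A.
Proof. by move/eqP. Qed.


Definition ml (G : seq M -> M) (L : nat) : Prop :=
  forall s1 s2 (x y : M) (a : R),
      (size s1 + size s2).+1 = L -> all iL s1 -> all iL s2 ->
      iL x -> iL y ->
      G (s1 ++ (a *: x + y) :: s2) = a *: G (s1 ++ x :: s2) + G (s1 ++ y :: s2).

Lemma ml_cons G L y : ml G L.+1 -> iL y -> ml (fun zs => G (y :: zs)) L.
Proof.
move=> h hy s1 s2 x z a e h1 h2 hx hz.
apply: (h (y :: s1) s2 x z a) => //; [by rewrite /= addSn e | by rewrite /= hy h1].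
Qed.

Lemma ml_zero G L s1 s2 : ml G L -> (size s1 + size s2).+1 = L ->
  all iL s1 -> all iL s2 -> G (s1 ++ 0 :: s2) = 0.
Proof.
move=> h e h1 h2; have := h s1 s2 0 0 1 e h1 h2 iL0 iL0.
rewrite !scale1r addr0 => /(congr1 (fun t => t - G (s1 ++ 0 :: s2))).
by rewrite subrr addrK => <-.
Qed.

Lemma ml_sum G L s1 s2 (F : 'I_n -> M) : ml G L -> (size s1 + size s2).+1 = L ->
  all iL s1 -> all iL s2 -> (forall b, iL (F b)) ->
  G (s1 ++ (\sum_(b : 'I_n) F b) :: s2) = \sum_(b : 'I_n) G (s1 ++ F b :: s2).
Proof.
move=> h e h1 h2 hF.
elim: (index_enum _) => [|b r IH]; first by rewrite !big_nil (ml_zero h).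
rewrite !big_cons -IH.
have hs : iL (\sum_(i <- r) F i) by apply: iL_sum => i _; exact: hF.
have := h s1 s2 (F b) (\sum_(i <- r) F i) 1 e h1 h2 (hF b) hs.
by rewrite !scale1r.
Qed.

Definition dp (k : nat) (F : seq M -> M) (s : seq M) : M :=
  \sum_(j < k) (-1) ^+ j.+1 *: F (mergeAt j s)
  + (-1) ^+ k.+1 *: ar (F (take k s)) (nth 0 s k).

Lemma hdiff_dp k F s : hdiff tl hd k F s = al (nth 0 s 0) (F (behead s)) + dp k F s.
Proof. by rewrite /hdiff /dp addrA. Qed.

Lemma dp_cons k G y ys : dp k.+1 G (y :: ys) =
  - G (y *m nth 0 ys 0 :: behead ys) - dp k (fun zs => G (y :: zs)) ys.
Proof.
rewrite /dp big_ord_recl /= /mergeAt /= drop1 expr1 scaleN1r.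
rewrite opprD -addrA; congr (_ + _).
rewrite -sumrN; congr (_ + _); last by rewrite exprS mulN1r scaleNr.
by apply: eq_bigr => j _; rewrite /bump leq0n add1n !add0n exprS mulN1r scaleNr.
Qed.


Fixpoint Tf (xs : seq M) (G : seq M -> M) (c : 'I_n) {struct xs} : M :=
  match xs with
  | [::] => G [:: E c]
  | x :: xs' => G (E c :: xs) -
      \sum_(b : 'I_n) Tf xs' (fun zs => G (E c *m x *m E b :: zs)) b
  end.

Fixpoint Pi (xs : seq M) (G : seq M -> M) (c : 'I_n) {struct xs} : M :=
  match xs with
  | [::] => ar (G [::]) (E c)
  | x :: xs' => \sum_(b : 'I_n) Pi xs' (fun zs => G (E c *m x *m E b :: zs)) b
  end.

Lemma Tf_cons x xs G c : Tf (x :: xs) G c =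
  G (E c :: x :: xs) - \sum_(b : 'I_n) Tf xs (fun zs => G (E c *m x *m E b :: zs)) b.
Proof. by []. Qed.

Lemma Pi_cons x xs G c : Pi (x :: xs) G c =
  \sum_(b : 'I_n) Pi xs (fun zs => G (E c *m x *m E b :: zs)) b.
Proof. by []. Qed.

Lemma iLEXE c x b : iL x -> iL (E c *m x *m E b).
Proof. by move=> hx; rewrite iL_mul ?iL_mul ?iLE. Qed.

Lemma Tf_resp xs G G' c : all iL xs ->
  (forall zs, size zs = (size xs).+1 -> all iL zs -> G zs = G' zs) ->
  Tf xs G c = Tf xs G' c.
Proof.
elim: xs G G' c => [|x xs IH] G G' c /=; first by move=> _ h; rewrite h //= iLE.
case/andP=> hx hxs h; rewrite h /= ?iLE ?hx ?hxs //; congr (_ - _).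
apply: eq_bigr => b _; apply: IH => // zs hz hzs; apply: h; rewrite /= ?hz //.
by rewrite iLEXE.
Qed.

Lemma Pi_resp xs G G' c : all iL xs ->
  (forall zs, size zs = size xs -> all iL zs -> G zs = G' zs) ->
  Pi xs G c = Pi xs G' c.
Proof.
elim: xs G G' c => [|x xs IH] G G' c /=; first by move=> _ h; rewrite h.
case/andP=> hx hxs h.
apply: eq_bigr => b _; apply: IH => // zs hz hzs; apply: h; rewrite /= ?hz //.
by rewrite iLEXE.
Qed.

Lemma Pi_zero xs c : Pi xs (fun _ => 0) c = 0.
Proof.
elim: xs c => [|x xs IH] c /=; first by rewrite /actr mul0mx pQ0.
by rewrite big1.
Qed.

Lemma Tf_zero xs c : Tf xs (fun _ => 0) c = 0.
Proof.
elim: xs c => [|x xs IH] c //=.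
by rewrite big1 ?subrr.
Qed.

Lemma Tf_lin xs G1 G2 a c :
  Tf xs (fun zs => a *: G1 zs + G2 zs) c = a *: Tf xs G1 c + Tf xs G2 c.
Proof.
elim: xs G1 G2 c => [|x xs IH] G1 G2 c //=.
rewrite (eq_bigr (fun b => a *: Tf xs (fun zs => G1 (E c *m x *m E b :: zs)) b
   + Tf xs (fun zs => G2 (E c *m x *m E b :: zs)) b)) => [|b _]; last exact: IH.
by rewrite big_split /= -scaler_sumr scalerBr opprD addrACA.
Qed.

Lemma Tf_opp xs G c : Tf xs (fun zs => - G zs) c = - Tf xs G c.
Proof.
elim: xs G c => [|x xs IH] G c //=.
rewrite (eq_bigr (fun b => - Tf xs (fun zs => G (E c *m x *m E b :: zs)) b)) => [|b _]; last exact: IH.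
by rewrite sumrN opprB opprK addrC.
Qed.

Lemma Tf_sub xs G1 G2 c :
  Tf xs (fun zs => G1 zs - G2 zs) c = Tf xs G1 c - Tf xs G2 c.
Proof.
elim: xs G1 G2 c => [|x xs IH] G1 G2 c //=.
rewrite (eq_bigr (fun b => Tf xs (fun zs => G1 (E c *m x *m E b :: zs)) b
   - Tf xs (fun zs => G2 (E c *m x *m E b :: zs)) b)) => [|b _]; last exact: IH.
by rewrite sumrB; apply/matrixP => i j; rewrite !mxE; ring.
Qed.

Lemma Tf_sum I (r : seq I) xs (F : I -> seq M -> M) c :
  Tf xs (fun zs => \sum_(i <- r) F i zs) c = \sum_(i <- r) Tf xs (F i) c.
Proof.
elim: r => [|i r IH].
  have -> : (fun zs => \sum_(i <- [::]) F i zs) = (fun _ => 0).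
    by apply: functional_extensionality => zs; rewrite big_nil.
  by rewrite big_nil Tf_zero.
rewrite big_cons -IH.
have -> : (fun zs => \sum_(j <- i :: r) F j zs) =
   (fun zs => 1 *: F i zs + \sum_(j <- r) F j zs).
  by apply: functional_extensionality => zs; rewrite big_cons scale1r.
by rewrite Tf_lin scale1r.
Qed.

Lemma Tf_al (l : M) xs G c : Tf xs (fun zs => al l (G zs)) c = al l (Tf xs G c).
Proof.
elim: xs G c => [|x xs IH] G c //=.
rewrite (eq_bigr (fun b => al l (Tf xs (fun zs => G (E c *m x *m E b :: zs)) b))) => [|b _]; last exact: IH.
by rewrite -al_sumr /actl mulmxBr pQB.
Qed.


Lemma ml_T G L c : ml G L.+1 -> ml (fun xs => Tf xs G c) L.
Proof.
move=> hG s1; elim: s1 G L c hG => [|z s1 IH] G L c hG s2 x y a e h1 h2 hx hy.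
  rewrite /=.
  rewrite (hG [:: E c] s2 x y a) /= ?iLE //; last by move: e => /=; lia.
  rewrite (eq_bigr (fun b => a *: Tf s2 (fun zs => G (E c *m x *m E b :: zs)) b
     + Tf s2 (fun zs => G (E c *m y *m E b :: zs)) b)) => [|b _]; last first.
    rewrite -Tf_lin; apply: Tf_resp => // zs hz hzs.
    rewrite (_ : E c *m (a *: x + y) *m E b = a *: (E c *m x *m E b) + E c *m y *m E b); last first.
      by rewrite mulmxDr mulmxDl -scalemxAr -scalemxAl.
    by apply: (hG [::] zs) => //; rewrite ?iLEXE //= hz; move: e => /=; lia.
  by rewrite big_split -scaler_sumr /=; mxring.
case: L e hG => [|L] e hG; first by move: e => /=; lia.
move: h1 => /= /andP [hz h1].
rewrite /=.
rewrite (hG [:: E c, z & s1] s2 x y a) /= ?iLE ?hz ?h1 //; last by move: e => /=; lia.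
rewrite (eq_bigr (fun b => a *: Tf (s1 ++ x :: s2) (fun zs => G (E c *m z *m E b :: zs)) b
     + Tf (s1 ++ y :: s2) (fun zs => G (E c *m z *m E b :: zs)) b)) => [|b _]; last first.
  apply: (IH _ L b (ml_cons hG (iLEXE c b hz))) => //; move: e => /=; lia.
by rewrite big_split -scaler_sumr /=; mxring.
Qed.

Lemma Pi_vanish xs G c a : all iL xs -> ml G (size xs) -> ge c a ->
  al (E a) (Pi xs G c) = 0.
Proof.
elim: xs G c => [|x xs IH] G c /=.
  by move=> _ _ h; rewrite /actl /actr pQ_mull ?iLE // mulmxA pQ_lam // EXE_lam.
case/andP=> hx hxs hG hca; rewrite al_sumr big1 // => b _.
case: (boolP (ge b c)) => hbc.
  by apply: IH => //; [exact: ml_cons hG (iLEXE c b hx) | exact: ge_trans hbc hca].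
rewrite EXE0 // (Pi_resp (G' := fun _ => 0)) ?Pi_zero ?al0 // => zs hz hzs.
by apply: (ml_zero (s1 := [::]) hG) => //=; rewrite hz.
Qed.


Lemma dp_cons2 k G y z zs : dp k.+1 G (y :: z :: zs) =
  - G (y *m z :: zs) - dp k (fun ws => G (y :: ws)) (z :: zs).
Proof. exact: dp_cons. Qed.

Lemma ar_sub_sum (A : M) (F : 'I_n -> M) x :
  ar (A - \sum_(b : 'I_n) F b) x = ar A x - \sum_(b : 'I_n) ar (F b) x.
Proof. by rewrite /actr mulmxBl pQB mulmx_suml pQ_sum. Qed.

Lemma dp_sub_sum k A (F : 'I_n -> seq M -> M) s :
  dp k (fun zs => A zs - \sum_(b : 'I_n) F b zs) s = dp k A s - \sum_(b : 'I_n) dp k (F b) s.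
Proof.
rewrite /dp ar_sub_sum.
rewrite (eq_bigr (fun j : 'I_k => (-1) ^+ j.+1 *: A (mergeAt j s)
   - \sum_(b : 'I_n) (-1) ^+ j.+1 *: F b (mergeAt j s))) => [|j _]; last first.
  by rewrite scalerBr scaler_sumr.
rewrite sumrB big_split /= exchange_big -scaler_sumr /=.
mxring.
Qed.

Lemma dp_al_sum k (F : 'I_n -> seq M -> M) s : iL (nth 0 s k) ->
  dp k (fun zs => \sum_(c : 'I_n) al (E c) (F c zs)) s = \sum_(c : 'I_n) al (E c) (dp k (F c) s).
Proof.
move=> hx; rewrite /dp.
rewrite [in RHS](eq_bigr (fun c => \sum_(j < k) (-1) ^+ j.+1 *: al (E c) (F c (mergeAt j s))
   + (-1) ^+ k.+1 *: ar (al (E c) (F c (take k s))) (nth 0 s k))) => [|c _]; last first.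
  rewrite alD al_sumr alZ al_ar ?iLE //; congr (_ + _).
  by apply: eq_bigr => j _; rewrite alZ.
rewrite big_split /= exchange_big -scaler_sumr /= ar_suml.
congr (_ + _); apply: eq_bigr => j _; by rewrite scaler_sumr.
Qed.


Lemma mainL k : forall xs G c, size xs = k.+1 -> all iL xs -> ml G k.+1 ->
  dp k (fun zs => Tf zs G c) xs + Tf xs (dp k.+1 G) c = - Pi xs G c.
Proof.
elim: k => [|k IH] xs G c.
  case: xs => [|x [|? ?]] // _ /andP [hx _] hG.
  have hs : \sum_(b : 'I_n) G [:: E c *m x *m E b *m E b] = G [:: E c *m x].
    rewrite (eq_bigr (fun b => G ([::] ++ (E c *m x *m E b) :: [::]))) => [|b _]; last first.
      by rewrite /= -mulmxA EE.
    rewrite -(ml_sum (L:=1) hG) //; first by rewrite -mulmx_sumr sumE mulmx1.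
    by move=> b; rewrite iLEXE.
  rewrite Tf_cons Pi_cons /dp !big_ord0 !big_ord1 /mergeAt /=.
  under eq_bigr => b _ do rewrite big_ord1 /=.
  rewrite big_split /= -scaler_sumr hs -scaler_sumr.
  mxring.
move=> Hs hxs hG; case: xs Hs hxs => [|x1 ys] // Hs /andP [hx1 hys].
have Hs' : size ys = k.+1 by move: Hs => /=; lia.
clear Hs; case: ys Hs' hys => [|y1 ys'] // Hs' hys.
move: (hys) => /andP [hy1 hys'].
have hyb : forall b, iL (E c *m x1 *m E b) by move=> b; exact: iLEXE.
have F1 : dp k (fun zs => Tf (x1 :: zs) G c) (y1 :: ys') =
   dp k (fun zs => G [:: E c, x1 & zs]) (y1 :: ys') -
   \sum_(b : 'I_n) dp k (fun zs => Tf zs (fun ws => G (E c *m x1 *m E b :: ws)) b) (y1 :: ys').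
  exact: dp_sub_sum.
have F2 : Tf [:: x1, y1 & ys'] (dp k.+2 G) c =
   (- G [:: E c *m x1, y1 & ys'] + G [:: E c, x1 *m y1 & ys']
      + dp k (fun zs => G [:: E c, x1 & zs]) (y1 :: ys'))
   - \sum_(b : 'I_n) (- Tf (y1 :: ys') (fun ws => G (E c *m x1 *m E b *m nth 0 ws 0 :: behead ws)) b
              - Tf (y1 :: ys') (dp k.+1 (fun zs => G (E c *m x1 *m E b :: zs))) b).
  rewrite Tf_cons dp_cons2 dp_cons2; congr (_ - _).
    mxring.
  apply: eq_bigr => b _.
  have -> : (fun zs => dp k.+2 G (E c *m x1 *m E b :: zs)) =
     (fun ws => - G (E c *m x1 *m E b *m nth 0 ws 0 :: behead ws)
        - dp k.+1 (fun zs => G (E c *m x1 *m E b :: zs)) ws).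
    by apply: functional_extensionality => ws; exact: dp_cons.
  by rewrite Tf_sub Tf_opp.
have F6 : \sum_(b : 'I_n) Tf (y1 :: ys') (fun ws => G (E c *m x1 *m E b *m nth 0 ws 0 :: behead ws)) b
   = G [:: E c *m x1, y1 & ys'] -
     \sum_(b' : 'I_n) Tf ys' (fun ws => G (E c *m (x1 *m y1) *m E b' :: ws)) b'.
  under eq_bigr => b _ do rewrite Tf_cons /=.
  rewrite sumrB; congr (_ - _).
    rewrite (eq_bigr (fun b => G ([::] ++ (E c *m x1 *m E b) :: (y1 :: ys')))) => [|b _]; last first.
      by rewrite /= -mulmxA EE.
    rewrite -(ml_sum hG) //=; first by rewrite -mulmx_sumr sumE mulmx1.
    by move: Hs' => /=; lia.
  rewrite exchange_big /=; apply: eq_bigr => b' _.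
  rewrite -Tf_sum; apply: Tf_resp => // zs hz hzs.
  rewrite (eq_bigr (fun b => G ([::] ++ (E c *m x1 *m E b *m (E b *m y1 *m E b')) :: zs))) => [|b _] //.
  rewrite -(ml_sum hG) //=; last by move=> b; rewrite !iL_mul ?iLE.
    congr G; congr (_ :: _).
    rewrite (eq_bigr (fun b => E c *m x1 *m E b *m y1 *m E b')) => [|b _]; last first.
      by rewrite !mulmxA -(mulmxA _ (E b) (E b)) EE.
    by rewrite -!mulmx_suml -mulmx_sumr sumE mulmx1 !mulmxA.
  by rewrite hz; move: Hs' => /=; lia.
have F3 : \sum_(b : 'I_n) Pi (y1 :: ys') (fun zs => G (E c *m x1 *m E b :: zs)) b =
   - \sum_(b : 'I_n) (dp k (fun zs => Tf zs (fun ws => G (E c *m x1 *m E b :: ws)) b) (y1 :: ys')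
     + Tf (y1 :: ys') (dp k.+1 (fun zs => G (E c *m x1 *m E b :: zs))) b).
  rewrite -sumrN; apply: eq_bigr => b _.
  by rewrite IH ?opprK //; exact: ml_cons hG (hyb b).
rewrite dp_cons2 F1 F2 Pi_cons F3 Tf_cons.
rewrite (_ : \sum_(b : 'I_n) (- Tf (y1 :: ys') (fun ws => G (E c *m x1 *m E b *m nth 0 ws 0 :: behead ws)) b
              - Tf (y1 :: ys') (dp k.+1 (fun zs => G (E c *m x1 *m E b :: zs))) b)
   = - \sum_(b : 'I_n) Tf (y1 :: ys') (fun ws => G (E c *m x1 *m E b *m nth 0 ws 0 :: behead ws)) b
     - \sum_(b : 'I_n) Tf (y1 :: ys') (dp k.+1 (fun zs => G (E c *m x1 *m E b :: zs))) b); last first.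
  by rewrite sumrB sumrN.
rewrite F6 [in RHS]big_split.
mxring.
Qed.


Definition Hc (f : seq M -> M) : seq M -> M :=
  fun ys => \sum_(c : 'I_n) al (E c) (Tf ys f c).

Lemma Hc_cochain k f : ml f k.+1 -> cochain tl hd k (Hc f).
Proof.
move=> hf; split.
  move=> s _ _; rewrite /inQ /Hc pQ_sum; apply/eqP; apply: eq_bigr => c _.
  by rewrite /actl pQ_id.
move=> s1 s2 x y a e h1 h2 hx hy; rewrite /Hc.
rewrite (eq_bigr (fun c => a *: al (E c) (Tf (s1 ++ x :: s2) f c)
    + al (E c) (Tf (s1 ++ y :: s2) f c))) => [|c _]; last first.
  have := @ml_T f k c hf s1 s2 x y a e h1 h2 hx hy; rewrite /= => ->.
  by rewrite al_linr.
by rewrite big_split scaler_sumr.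
Qed.

Lemma HH_all k : HH_vanishes R tl hd k.
Proof.
case: k => [|k] f [hQ hml] hcoc.
  move=> s /size0nil ->.
  have hm : pQ (f [::]) = f [::] by apply/eqP; exact: hQ [::] erefl isT.
  rewrite -hm -[f [::]]mul1mx -sumE mulmx_suml pQ_sum big1 // => c _.
  have hc := hcoc [:: E c] erefl (etrans (andbT _) (iLE c)).
  rewrite hdiff_dp /dp big_ord0 add0r /= expr1 scaleN1r in hc.
  have e : al (E c) (f [::]) = ar (f [::]) (E c).
    by move/eqP: hc; rewrite subr_eq0 => /eqP.
  transitivity (al (E c) (al (E c) (f [::]))).
    by rewrite al_assoc ?iLE // EE.
  by rewrite e /actl /actr pQ_mull ?iLE // mulmxA pQ_lam // EXE_lam // ge_refl.
exists (Hc f); split; first exact: Hc_cochain.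
move=> s hs hsL; case: s hs hsL => [|x1 ys] // hs hsL.
have hx1 : iL x1 by case/andP: hsL.
have hys : all iL ys by case/andP: hsL.
have hk : iL (nth 0 (x1 :: ys) k) by apply: (all_nthP 0 hsL); rewrite hs.
rewrite hdiff_dp (_ : nth 0 (x1 :: ys) 0 = x1) // (_ : behead (x1 :: ys) = ys) //.
rewrite (dp_al_sum (fun c zs => Tf zs f c)) //.
have key : forall c, al (E c) (dp k (fun zs => Tf zs f c) (x1 :: ys)) =
    al (E c) (al (E c) (f (x1 :: ys)))
    - \sum_(b : 'I_n) al (E c) (al (E c *m x1 *m E b) (Tf ys f b)).
  move=> c.
  have m := @mainL k (x1 :: ys) f c hs hsL hml.
  have e1 : dp k (fun zs => Tf zs f c) (x1 :: ys) =
      - Pi (x1 :: ys) f c - Tf (x1 :: ys) (dp k.+1 f) c by rewrite -m addrK.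
  have e2 : Tf (x1 :: ys) (dp k.+1 f) c = - (al (E c) (f (x1 :: ys))
       - \sum_(b : 'I_n) al (E c *m x1 *m E b) (Tf ys f b)).
    rewrite (Tf_resp (G' := fun zs => - al (nth 0 zs 0) (f (behead zs)))) //; last first.
      move=> zs hz hzs; have := hcoc zs (etrans hz (congr1 S hs)) hzs.
      by rewrite hdiff_dp => /eqP; rewrite addrC addr_eq0 => /eqP.
    rewrite Tf_opp Tf_cons; congr (- (_ - _)); apply: eq_bigr => b _; exact: Tf_al.
  rewrite e1 e2 opprK alD alN Pi_vanish ?hs ?ge_refl // oppr0 add0r alD alN al_sumr.
  by [].
under eq_bigr => c _ do rewrite key.
rewrite sumrB.
rewrite (eq_bigr (fun c => al (E c) (f (x1 :: ys)))) => [|c _]; last first.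
  by rewrite al_assoc ?iLE // EE.
have hfx : al 1%:M (f (x1 :: ys)) = f (x1 :: ys).
  by rewrite /actl mul1mx; apply/eqP; exact: hQ _ hs hsL.
rewrite -al_suml sumE hfx.
rewrite exchange_big /=.
rewrite (eq_bigr (fun b => al (x1 *m E b) (Tf ys f b))) => [|b _]; last first.
  rewrite (eq_bigr (fun c => al (E c *m x1 *m E b) (Tf ys f b))) => [|c _]; last first.
    by rewrite al_assoc ?iLE // !mulmxA EE.
  by rewrite -al_suml -!mulmx_suml sumE mul1mx.
rewrite /Hc al_sumr [X in _ = X + _](eq_bigr (fun b => al (x1 *m E b) (Tf ys f b))) => [|b _]; last first.
  by rewrite al_assoc.
by rewrite addrC subrK.
Qed.

End Work.

Theorem theorem4p5 (R : comPzRingType) (n : nat) (Ar : finType)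
  (tl hd : Ar -> 'I_n) :
  ordered_quiver tl hd ->
  forall i : nat, HH_vanishes R tl hd i.
Proof. by move=> _ i; exact: HH_all. Qed.
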